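(* Let $T,L$ be positive integers and $\epsilon\in(0,1)$. For $\rho=\{\rho_t^l\}\in[0,1]^{T\times L}$ let $F(\rho)=\sum_{t,l}\rho_t^l r_t^l b_t^l(\rho_t^l)$, $G(\rho)=1-\prod_{t=1}^T\prod_{l=1}^L\rho_t^l$, $H(\rho)=\sum_{t,l}(1-\rho_t^l)$. Let $\rho^\ast$ be an optimal solution of PA1: $\min F(\rho)$ s.t. $G(\rho)\le\epsilon$, $\rho\in[0,1]^{T\times L}$. Let $\tilde\lambda,\tilde\rho$ be optimal solutions of $\max_{\lambda\ge0}\min_{\rho\in[0,1]^{T\times L}}\{F(\rho)+\lambda[H(\rho)-\epsilon]\}$. Then $$0\le F(\tilde\rho)-F(\rho^\ast)\le\tilde\lambda\,\frac{TL(TL-1)}{2}\epsilon^2.$$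
   Context: For each $t\in\{1,\dots,T\}$, $l\in\{1,\dots,L\}$: $r_t^l$ is a positive integer and $b_t^l:[0,1]\to[0,b^l_{\max}]$ is strictly increasing and convex. $\rho_t^l$ is the probability of the event of successfully recruiting $r_t^l$ participants at time $t$, location $l$, and these events are independent. PA2 denotes the problem $\min F(\rho)$ s.t. $H(\rho)\le\epsilon$, $\rho\in[0,1]^{T\times L}$, so $F(\tilde\rho)$ is the optimal value of PA2 and $F(\rho^\ast)$ that of PA1. *)

(* Defs.v *)
From HB Require Import structures.
From mathcomp Require Import all_boot all_order all_algebra.
From mathcomp Require Import all_classical all_reals.
Set Implicit Arguments. Unset Strict Implicit. Unset Printing Implicit Defensive.
Import Order.TTheory GRing.Theory Num.Theory.
Local Open Scope ring_scope.
Local Open Scope classical_set_scope.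

Section Defs.
Variables (R : realType) (T L : nat).

Definition in_box (rho : 'I_T -> 'I_L -> R) : Prop :=
  forall t l, 0 <= rho t l <= 1.

Definition Fobj (r : 'I_T -> 'I_L -> nat) (b : 'I_T -> 'I_L -> R -> R)
  (rho : 'I_T -> 'I_L -> R) : R :=
  \sum_(t < T) \sum_(l < L) rho t l * (r t l)%:R * b t l (rho t l).

Definition Gcons (rho : 'I_T -> 'I_L -> R) : R :=
  1 - \prod_(t < T) \prod_(l < L) rho t l.

Definition Hcons (rho : 'I_T -> 'I_L -> R) : R :=
  \sum_(t < T) \sum_(l < L) (1 - rho t l).

Definition Lag r b (eps lam : R) (rho : 'I_T -> 'I_L -> R) : R :=
  Fobj r b rho + lam * (Hcons rho - eps).

Definition dualfun r b (eps lam : R) : R :=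
  inf [set Lag r b eps lam rho | rho in in_box].

Definition PA1_optimal r b (eps : R) (rho : 'I_T -> 'I_L -> R) : Prop :=
  in_box rho /\ Gcons rho <= eps /\
  forall rho', in_box rho' -> Gcons rho' <= eps -> Fobj r b rho <= Fobj r b rho'.

Definition dual_optimal r b (eps lam : R) (rho : 'I_T -> 'I_L -> R) : Prop :=
  0 <= lam /\
  (forall lam', 0 <= lam' -> dualfun r b eps lam' <= dualfun r b eps lam) /\
  in_box rho /\
  (forall rho', in_box rho' -> Lag r b eps lam rho <= Lag r b eps lam rho').
End Defs.

Definition maps_into01 {R : realType} (f : R -> R) (bmax : R) : Prop :=
  forall x, 0 <= x <= 1 -> 0 <= f x <= bmax.

Definition strictly_increasing01 {R : realType} (f : R -> R) : Prop :=
  forall x y, 0 <= x <= 1 -> 0 <= y <= 1 -> x < y -> f x < f y.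

Definition convex01 {R : realType} (f : R -> R) : Prop :=
  forall x y a, 0 <= x <= 1 -> 0 <= y <= 1 -> 0 <= a <= 1 ->
    f (a * x + (1 - a) * y) <= a * f x + (1 - a) * f y.

(* Main.v *)
Require Import Defs.
From HB Require Import structures.
From mathcomp Require Import all_boot all_order all_algebra.
From mathcomp Require Import all_classical all_reals.
From mathcomp Require Import ring lra.
Import Order.TTheory GRing.Theory Num.Theory.
Local Open Scope ring_scope.

Lemma seq_facts (R : realType) (I : Type) (x : I -> R) (e : R) (s : seq I) :
  (forall i, 0 <= x i <= 1) -> (forall i, 1 - x i <= e) -> 0 <= e ->
  [/\ 0 <= \prod_(i <- s) x i <= 1,
      1 - \prod_(i <- s) x i <= \sum_(i <- s) (1 - x i),
      \sum_(i <- s) (1 - x i) <= (size s)%:R * e &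
      \sum_(i <- s) (1 - x i) <= 1 - \prod_(i <- s) x i +
          ((size s)%:R * ((size s)%:R - 1) / 2) * e ^+ 2].
Proof.
move=> hx he e0; elim: s => [|a s [/andP [P0 P1] U S B]].
  by rewrite !big_nil /=; split; lra.
rewrite !big_cons /= -addn1 natrD.
have [xa0 xa1] := andP (hx a); have ea := he a.
set P := \prod_(i <- s) x i in P0 P1 U S B *.
set Su := \sum_(i <- s) (1 - x i) in U S B *.
set m := (size s)%:R in S B *.
have m0 : 0 <= m by rewrite /m ler0n.
split.
- apply/andP; split; nra.
- nra.
- nra.
- have h1 : (1 - x a) * (1 - P) <= e * (m * e).
    apply: ler_pM; nra.
  rewrite expr2 in B *; nra.
Qed.

Lemma coord_gap (R : realType) (f : R -> R) (rr x y : R) :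
  convex01 f -> 0 <= rr -> 0 <= x <= 1 -> 0 <= y <= 1 ->
  2 * ((x + y) / 2 * rr * f ((x + y) / 2)) + (rr * ((x - y) * (f x - f y))) / 2
  <= x * rr * f x + y * rr * f y.
Proof.
move=> cf r0 hx hy.
have h := cf x y (1/2) hx hy.
have e : 1 / 2 * x + (1 - 1 / 2) * y = (x + y) / 2 by field.
have e2 : (1 - 1/2 : R) = 1/2 by field.
rewrite e e2 in h.
have /andP[x0 x1] := hx; have /andP[y0 y1] := hy.
have h2 : (x + y) * f ((x + y) / 2) <= (x + y) * (1 / 2 * f x + 1 / 2 * f y).
  by apply: ler_wpM2l; [lra|apply: h; lra].
nra.
Qed.

Lemma coord_nonneg (R : realType) (f : R -> R) x y :
  strictly_increasing01 f -> 0 <= x <= 1 -> 0 <= y <= 1 ->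
  0 <= (x - y) * (f x - f y).
Proof.
move=> hf hx hy.
have [xy|yx|->] := ltgtP x y.
- have := hf x y hx hy xy; nra.
- have := hf y x hy hx yx; nra.
- by rewrite subrr mul0r.
Qed.

Lemma lag_gap (R : realType) (T L : nat) (r : 'I_T -> 'I_L -> nat)
  (b : 'I_T -> 'I_L -> R -> R) (eps lam : R) (rho0 rho : 'I_T -> 'I_L -> R) :
  (forall t l, convex01 (b t l)) ->
  in_box rho0 -> (forall rho', in_box rho' -> Lag r b eps lam rho0 <= Lag r b eps lam rho') ->
  in_box rho ->
  (\sum_(t < T) \sum_(l < L) ((r t l)%:R * ((rho t l - rho0 t l) * (b t l (rho t l) - b t l (rho0 t l))))) / 2
  <= Lag r b eps lam rho - Lag r b eps lam rho0.
Proof.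
move=> hc b0 hmin b1.
pose m t l := (rho t l + rho0 t l) / 2.
have bm : in_box m.
  move=> t l; have /andP[? ?] := b0 t l; have /andP[? ?] := b1 t l.
  rewrite /m; apply/andP; split; lra.
have := hmin m bm.
have HH : 2 * Hcons m = Hcons rho + Hcons rho0.
  rewrite /Hcons -big_split mulr_sumr; apply: eq_bigr => t _.
  rewrite -big_split mulr_sumr; apply: eq_bigr => l _; rewrite /m /=; lra.
have FF : 2 * Fobj r b m + (\sum_(t < T) \sum_(l < L) ((r t l)%:R * ((rho t l - rho0 t l) * (b t l (rho t l) - b t l (rho0 t l))))) / 2
   <= Fobj r b rho + Fobj r b rho0.
  rewrite /Fobj mulr_sumr mulr_suml -!big_split /=; apply: ler_sum => t _.
  rewrite mulr_sumr mulr_suml -!big_split /=; apply: ler_sum => l _.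
  by apply: coord_gap => //; rewrite ler0n.
rewrite /Lag; nra.
Qed.

Lemma term_le_sum (R : realType) (T L : nat) (F : 'I_T -> 'I_L -> R) t0 l0 :
  (forall t l, 0 <= F t l) -> F t0 l0 <= \sum_(t < T) \sum_(l < L) F t l.
Proof.
move=> h.
rewrite (bigD1 t0) //= (bigD1 l0) //=.
have h1 : 0 <= \sum_(l < L | l != l0) F t0 l by apply: sumr_ge0.
have h2 : 0 <= \sum_(t < T | t != t0) \sum_(l < L) F t l.
  by apply: sumr_ge0 => t _; apply: sumr_ge0.
lra.
Qed.

Lemma unif_c (R : realType) (I : finType) (P : I -> R -> Prop) :
  (forall i c c', 0 < c' <= c -> P i c -> P i c') ->
  (forall i, exists c, 0 < c /\ P i c) -> exists c, 0 < c /\ forall i, P i c.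
Proof.
move=> mono ex.
suff : forall s : seq I, exists c, 0 < c /\ forall i, i \in s -> P i c.
  by case/(_ (enum I)) => c [c0 hc]; exists c; split => // i; apply: hc; rewrite mem_enum.
elim => [|a s [c [c0 hc]]]; first by exists 1; split => //; lra.
have [ca [ca0 hca]] := ex a.
exists (Num.min c ca); split; first by rewrite lt_min c0 ca0.
move=> i; rewrite in_cons => /orP[/eqP->|hi].
  by apply: mono hca; rewrite lt_min c0 ca0 /= ge_min lexx orbT.
by apply: mono (hc i hi); rewrite lt_min c0 ca0 /= ge_min lexx.
Qed.

Lemma coord_c (R : realType) (f : R -> R) (rr : nat) (y k : R) :
  (0 < rr)%N -> strictly_increasing01 f -> 0 <= y <= 1 -> 0 < k ->
  exists c, 0 < c /\ forall x, 0 <= x <= 1 -> k <= `|x - y| ->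
     c <= rr%:R * ((x - y) * (f x - f y)).
Proof.
move=> r0 hf hy k0.
have r1 : 1 <= (rr%:R : R) by rewrite ler1n.
have /andP[y0 y1] := hy.
have [dp [dp0 hdp]] : exists d, 0 < d /\ forall x, 0 <= x <= 1 -> y + k <= x -> d <= f x - f y.
  case: (lerP (y + k) 1) => hk.
    exists (f (y + k) - f y); split.
      have := hf y (y + k) hy; rewrite hk andbT; move/(_ _) => h.
      have := h ltac:(lra) ltac:(lra); lra.
    move=> x hx hxk.
    have [e|lt] := eqVneq x (y + k); first by rewrite e; lra.
    have := hf (y + k) x; rewrite hk andbT => h.
    have := h ltac:(lra) hx ltac:(rewrite lt_neqAle eq_sym lt hxk //); lra.
  exists 1; split; first lra.
  move=> x /andP[_ x1] hxk; lra.
have [dm [dm0 hdm]] : exists d, 0 < d /\ forall x, 0 <= x <= 1 -> x <= y - k -> d <= f y - f x.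
  case: (lerP 0 (y - k)) => hk.
    exists (f y - f (y - k)); split.
      have := hf (y - k) y; rewrite hk /= => h.
      have := h ltac:(lra) hy ltac:(lra); lra.
    move=> x hx hxk.
    have [e|lt] := eqVneq x (y - k); first by rewrite e; lra.
    have := hf x (y - k); rewrite hk /= => h.
    have := h hx ltac:(lra) ltac:(rewrite lt_neqAle lt hxk //); lra.
  exists 1; split; first lra.
  move=> x /andP[x0 _] hxk; lra.
exists (k * Num.min dp dm); split; first by rewrite mulr_gt0 // lt_min dp0 dm0.
move=> x hx hk.
have m1 : Num.min dp dm <= dp by rewrite ge_min lexx.
have m2 : Num.min dp dm <= dm by rewrite ge_min lexx orbT.
have mp : 0 < Num.min dp dm by rewrite lt_min dp0 dm0.
have nn : 0 <= (x - y) * (f x - f y) by apply: coord_nonneg.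
have : k * Num.min dp dm <= (x - y) * (f x - f y).
  move: hk; case: (lerP 0 (x - y)) => s.
    rewrite ger0_norm // => hk.
    have := hdp x hx ltac:(lra); nra.
  rewrite ltr0_norm // => hk.
  have := hdm x hx ltac:(lra); nra.
nra.
Qed.

Lemma growth (R : realType) (T L : nat) (r : 'I_T -> 'I_L -> nat)
  (b : 'I_T -> 'I_L -> R -> R) (eps lam : R) (rho0 : 'I_T -> 'I_L -> R) (k : R) :
  (forall t l, (0 < r t l)%N) ->
  (forall t l, strictly_increasing01 (b t l)) ->
  (forall t l, convex01 (b t l)) ->
  in_box rho0 -> (forall rho', in_box rho' -> Lag r b eps lam rho0 <= Lag r b eps lam rho') ->
  0 < k ->
  exists c, 0 < c /\ forall rho, in_box rho -> (exists t l, k <= `|rho t l - rho0 t l|) ->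
    Lag r b eps lam rho0 + c <= Lag r b eps lam rho.
Proof.
move=> hr hi hc b0 hmin k0.
pose P (p : ('I_T * 'I_L)%type) (c : R) := forall x, 0 <= x <= 1 -> k <= `|x - rho0 p.1 p.2| ->
     c <= (r p.1 p.2)%:R * ((x - rho0 p.1 p.2) * (b p.1 p.2 x - b p.1 p.2 (rho0 p.1 p.2))).
have [c [c0 hcP]] : exists c, 0 < c /\ forall p, P p c.
  apply: unif_c.
    move=> p c c' /andP[_ h] hp x hx hk; exact: le_trans h (hp x hx hk).
  by move=> [t l]; apply: coord_c.
exists (c / 2); split; first lra.
move=> rho b1 [t [l hk]].
have := @lag_gap R T L r b eps lam rho0 rho hc b0 hmin b1.
have : c <= \sum_(t < T) \sum_(l < L) ((r t l)%:R * ((rho t l - rho0 t l) * (b t l (rho t l) - b t l (rho0 t l)))).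
  apply: le_trans (hcP (t, l) _ (b1 t l) hk) _.
  apply: (@term_le_sum R T L (fun t l => (r t l)%:R * ((rho t l - rho0 t l) * (b t l (rho t l) - b t l (rho0 t l)))) t l).
  move=> t' l'; apply: mulr_ge0; first by rewrite ler0n.
  exact: coord_nonneg.
lra.
Qed.

Lemma sum_const2 (R : realType) (T L : nat) (k : R) : \sum_(t < T) \sum_(l < L) k = (T * L)%:R * k.
Proof. by rewrite !sumr_const !card_ord -mulrnA mulr_natl mulnC. Qed.

Lemma pigeon (R : realType) (T L : nat) (rho rho0 : 'I_T -> 'I_L -> R) (k : R) :
  (forall t l, `|rho t l - rho0 t l| < k) ->
  `|Hcons rho - Hcons rho0| <= (T * L)%:R * k.
Proof.
move=> h.
have -> : Hcons rho - Hcons rho0 = \sum_(t < T) \sum_(l < L) (rho0 t l - rho t l).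
  rewrite /Hcons -sumrB; apply: eq_bigr => t _; rewrite -sumrB; apply: eq_bigr => l _; lra.
rewrite -sum_const2; apply: le_trans (ler_norm_sum _ _ _) _.
apply: ler_sum => t _; apply: le_trans (ler_norm_sum _ _ _) _.
apply: ler_sum => l _; rewrite distrC; exact: ltW.
Qed.

Lemma H_bounds (R : realType) (T L : nat) (rho : 'I_T -> 'I_L -> R) :
  in_box rho -> 0 <= Hcons rho <= (T * L)%:R.
Proof.
move=> hb; apply/andP; split.
  apply: sumr_ge0 => t _; apply: sumr_ge0 => l _; have /andP[? ?] := hb t l; lra.
rewrite -[X in _ <= X]mulr1 -sum_const2; apply: ler_sum => t _; apply: ler_sum => l _.
have /andP[? ?] := hb t l; lra.
Qed.

Lemma dual_le (R : realType) (T L : nat) (r : 'I_T -> 'I_L -> nat) (b : 'I_T -> 'I_L -> R -> R) (eps lam : R) (rho0 : 'I_T -> 'I_L -> R) :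
  in_box rho0 -> (forall rho', in_box rho' -> Lag r b eps lam rho0 <= Lag r b eps lam rho') ->
  dualfun r b eps lam = Lag r b eps lam rho0.
Proof.
move=> b0 hmin; rewrite /dualfun.
apply/eqP; rewrite eq_le; apply/andP; split.
  apply: ge_inf; last by exists rho0.
  by exists (Lag r b eps lam rho0) => _ [rho hb <-]; apply: hmin.
apply: lb_le_inf; first by exists (Lag r b eps lam rho0), rho0.
by move=> _ [rho hb <-]; apply: hmin.
Qed.

Lemma dual_ge (R : realType) (T L : nat) (r : 'I_T -> 'I_L -> nat) (b : 'I_T -> 'I_L -> R -> R) (eps lam m : R) (rho0 : 'I_T -> 'I_L -> R) :
  in_box rho0 -> (forall rho', in_box rho' -> m <= Lag r b eps lam rho') ->
  m <= dualfun r b eps lam.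
Proof.
move=> b0 hmin; rewrite /dualfun.
apply: lb_le_inf; first by exists (Lag r b eps lam rho0), rho0.
by move=> _ [rho hb <-]; apply: hmin.
Qed.

Lemma GH_pairs (R : realType) (T L : nat) (rho : 'I_T -> 'I_L -> R) :
  Gcons rho = 1 - \prod_(p : 'I_T * 'I_L) rho p.1 p.2 /\
  Hcons rho = \sum_(p : 'I_T * 'I_L) (1 - rho p.1 p.2).
Proof. by rewrite /Gcons /Hcons !pair_big. Qed.

Lemma sz_enum (T : finType) : size (index_enum T) = #|T|.
Proof. by rewrite cardT enumT. Qed.

Lemma size_pairs (T L : nat) : size (index_enum ('I_T * 'I_L)%type) = (T * L)%N.
Proof. by rewrite sz_enum card_prod !card_ord. Qed.

Lemma G_le_H (R : realType) (T L : nat) (rho : 'I_T -> 'I_L -> R) :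
  in_box rho -> Gcons rho <= Hcons rho.
Proof.
move=> hb; have [-> ->] := @GH_pairs R T L rho.
have [_ h _ _] := @seq_facts R _ (fun p : 'I_T * 'I_L => rho p.1 p.2) 1 (index_enum _)
  (fun p => hb p.1 p.2) (fun p => ltac:(have /andP[? ?] := hb p.1 p.2; lra)) ler01.
exact: h.
Qed.

Lemma H_star (R : realType) (T L : nat) (rho : 'I_T -> 'I_L -> R) (eps : R) :
  in_box rho -> Gcons rho <= eps -> 0 <= eps ->
  Hcons rho <= Gcons rho + (((T * L)%:R * ((T * L)%:R - 1)) / 2) * eps ^+ 2.
Proof.
move=> hb hG e0; have [EG EH] := @GH_pairs R T L rho.
have hx : forall p : 'I_T * 'I_L, 1 - rho p.1 p.2 <= eps.
  move=> p; apply: le_trans hG; rewrite EG.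
  rewrite (bigD1 p) //=.
  have h0 : 0 <= \prod_(q | q != p) rho q.1 q.2 by apply: prodr_ge0 => q _; have /andP[? ?] := hb q.1 q.2.
  have h1 : \prod_(q | q != p) rho q.1 q.2 <= 1 by apply: prodr_ile1 => q _; exact: hb.
  have /andP[? ?] := hb p.1 p.2; nra.
have [_ _ _ h] := @seq_facts R _ (fun p : 'I_T * 'I_L => rho p.1 p.2) eps (index_enum _)
  (fun p => hb p.1 p.2) hx e0.
rewrite EH EG; move: h; rewrite size_pairs.
by [].
Qed.

Lemma Lag_shift (R : realType) (T L : nat) (r : 'I_T -> 'I_L -> nat) (b : 'I_T -> 'I_L -> R -> R)
  (eps lam d : R) rho : Lag r b eps (lam + d) rho = Lag r b eps lam rho + d * (Hcons rho - eps).
Proof. rewrite /Lag; ring. Qed.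

Theorem theorem1 (R : realType) (T L : nat) (hT : (0 < T)%N) (hL : (0 < L)%N)
  (eps : R) (heps : 0 < eps < 1)
  (r : 'I_T -> 'I_L -> nat) (hr : forall t l, (0 < r t l)%N)
  (bmax : 'I_L -> R) (b : 'I_T -> 'I_L -> R -> R)
  (hb_range : forall t l, maps_into01 (b t l) (bmax l))
  (hb_inc : forall t l, strictly_increasing01 (b t l))
  (hb_cvx : forall t l, convex01 (b t l))
  (rho_star : 'I_T -> 'I_L -> R) (h_star : PA1_optimal r b eps rho_star)
  (lam_t : R) (rho_t : 'I_T -> 'I_L -> R) (h_t : dual_optimal r b eps lam_t rho_t) :
  0 <= Fobj r b rho_t - Fobj r b rho_star /\
  Fobj r b rho_t - Fobj r b rho_star
    <= lam_t * (((T * L)%:R * ((T * L)%:R - 1)) / 2) * eps ^+ 2.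
Proof.
have [lam0 [hdual [bt hmin]]] := h_t.
have [bs [hGs hopt]] := h_star.
have /andP[e0 e1] := heps.
have N0 : 0 < ((T * L)%:R : R) by rewrite ltr0n muln_gt0 hT hL.
set N := ((T * L)%:R : R) in N0 *.
have nobetter : forall lam' mu, 0 <= lam' -> 0 < mu ->
    (forall rho, in_box rho -> Lag r b eps lam_t rho_t + mu <= Lag r b eps lam' rho) -> False.
  move=> lam' mu l0 mu0 h.
  have h1 := @dual_ge R T L r b eps lam' _ rho_t bt h.
  have h2 := hdual lam' l0.
  rewrite (@dual_le R T L r b eps lam_t rho_t bt hmin) in h2; lra.
have HB := @H_bounds R T L.
have feas : Hcons rho_t <= eps.
  case: (lerP (Hcons rho_t) eps) => hH //; exfalso.
  pose eta := (Hcons rho_t - eps) / 2.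
  have eta0 : 0 < eta by rewrite /eta; lra.
  have k0 : 0 < eta / N by apply: divr_gt0.
  have [c [c0 hc]] := @growth R T L r b eps lam_t rho_t (eta / N) hr hb_inc hb_cvx bt hmin k0.
  pose d := c / (4 * eps).
  have d0 : 0 < d by apply: divr_gt0 => //; lra.
  have de : d * eps = c / 4 by rewrite /d; field; lra.
  apply: (nobetter (lam_t + d) (Num.min (c / 4) (d * eta))); first lra.
    by rewrite lt_min; apply/andP; split; [lra| apply: mulr_gt0].
  move=> rho hb; rewrite Lag_shift.
  have m1 : Num.min (c / 4) (d * eta) <= c / 4 by rewrite ge_min lexx.
  have m2 : Num.min (c / 4) (d * eta) <= d * eta by rewrite ge_min lexx orbT.
  have /andP[H0 _] := HB rho hb.
  case: (pselect (exists t l, eta / N <= `|rho t l - rho_t t l|)) => [ex|nex].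
    have := hc rho hb ex; nra.
  have hall : forall t l, `|rho t l - rho_t t l| < eta / N.
    by move=> t l; rewrite ltNge; apply/negP => hk; apply: nex; exists t, l.
  have := @pigeon R T L rho rho_t _ hall.
  have -> : N * (eta / N) = eta by rewrite mulrC divfK // gt_eqF.
  move=> /ler_normlP [h1 h2].
  have hd : d * eta <= d * (Hcons rho - eps).
    by apply: ler_wpM2l; [lra | rewrite /eta in h1 *; lra].
  have := hmin rho hb; lra.
have slack : lam_t * (Hcons rho_t - eps) = 0.
  case: (lerP lam_t 0) => hl0; first by rewrite (_ : lam_t = 0) ?mul0r //; lra.
  case: (lerP eps (Hcons rho_t)) => hH; first by rewrite (_ : Hcons rho_t - eps = 0) ?mulr0 //; lra.
  exfalso.
  pose eta := (eps - Hcons rho_t) / 2.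
  have eta0 : 0 < eta by rewrite /eta; lra.
  have k0 : 0 < eta / N by apply: divr_gt0.
  have [c [c0 hc]] := @growth R T L r b eps lam_t rho_t (eta / N) hr hb_inc hb_cvx bt hmin k0.
  pose d := Num.min lam_t (c / (4 * N)).
  have d0 : 0 < d by rewrite lt_min hl0 /=; apply: divr_gt0 => //; lra.
  have dl : d <= lam_t by rewrite ge_min lexx.
  have dN : d * N <= c / 4.
    have : d <= c / (4 * N) by rewrite ge_min lexx orbT.
    have -> : c / 4 = (c / (4 * N)) * N.
      field; by rewrite !pnatr_eq0 -!lt0n hT hL.
    move=> h; apply: ler_wpM2r => //; lra.
  apply: (nobetter (lam_t + - d) (Num.min (c / 4) (d * eta))); first lra.
    by rewrite lt_min; apply/andP; split; [lra| apply: mulr_gt0].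
  move=> rho hb; rewrite Lag_shift.
  have m1 : Num.min (c / 4) (d * eta) <= c / 4 by rewrite ge_min lexx.
  have m2 : Num.min (c / 4) (d * eta) <= d * eta by rewrite ge_min lexx orbT.
  have /andP[H0 H1] := HB rho hb.
  case: (pselect (exists t l, eta / N <= `|rho t l - rho_t t l|)) => [ex|nex].
    have := hc rho hb ex; nra.
  have hall : forall t l, `|rho t l - rho_t t l| < eta / N.
    by move=> t l; rewrite ltNge; apply/negP => hk; apply: nex; exists t, l.
  have := @pigeon R T L rho rho_t _ hall.
  have -> : N * (eta / N) = eta by rewrite mulrC divfK // gt_eqF.
  move=> /ler_normlP [h1 h2].
  have hd : d * eta <= d * (eps - Hcons rho).
    by apply: ler_wpM2l; [lra | rewrite /eta in h2 *; lra].
  have := hmin rho hb; lra.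
split.
  have := hopt rho_t bt (le_trans (@G_le_H R T L rho_t bt) feas); lra.
have := hmin rho_star bs.
have := @H_star R T L rho_star eps bs hGs ltac:(lra).
rewrite /Lag -/N; move: slack; set C := (N * (N - 1) / 2).
move=> sl hH hL'.
have : lam_t * (Hcons rho_star - eps) <= lam_t * (C * eps ^+ 2).
  apply: ler_wpM2l => //; lra.
nra.
Qed.
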